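(* Let $m_1,m_2\ge 1$ be integers and let $s_1,s_2\in\{+1,-1\}$. Let $$|\mathscr{G}_1\rangle=\tfrac{1}{\sqrt2}\Big(|0\rangle\textstyle\bigotimes_{k=2}^{2m_1}|i^1_k\rangle+s_1\,|1\rangle\bigotimes_{k=2}^{2m_1}|\bar i^1_k\rangle\Big),\qquad |\mathscr{G}_2\rangle=\tfrac{1}{\sqrt2}\Big(|0\rangle\textstyle\bigotimes_{k=2}^{2m_2}|i^2_k\rangle+s_2\,|1\rangle\bigotimes_{k=2}^{2m_2}|\bar i^2_k\rangle\Big)$$ be a $2m_1$-qubit and a $2m_2$-qubit state, with all $i^h_k\in\{0,1\}$, and consider the product state $|\mathscr{G}_1\rangle\otimes|\mathscr{G}_2\rangle$. Call ''part 1'' and ''part 2'' the first $m_1$ and the last $m_1$ qubits of $|\mathscr{G}_1\rangle$, and ''part 3'' and ''part 4'' the first $m_2$ and the last $m_2$ qubits of $|\mathscr{G}_2\rangle$. Perform a projective measurement in the GHZ basis (the Bell basis when $m_1=m_2=1$) on the $(m_1+m_2)$-qubit register formed by parts 1 and 3 (ordered: part 1 then part 3), or alternatively on the register formed by parts 1 and 4 (ordered: part 1 then part 4). Let $|\mathcal{G}_a\rangle$ denote the obtained measurement outcome (a GHZ basis state) and $|\mathcal{G}_b\rangle$ the state into which the remaining $m_1+m_2$ qubits (parts 2 and 4 in the first case, ordered part 2 then part 4; parts 2 and 3 in the second case, ordered part 2 then part 3) collapse. Suppose the following two conditions hold: (1) either for both $h=1,2$ the string $0i^h_2i^h_3\cdots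 i^h_{m_h}$ equals $i^h_{m_h+1}i^h_{m_h+2}\cdots i^h_{2m_h}$, or for both $h=1,2$ the string $0i^h_2i^h_3\cdots i^h_{m_h}$ equals $\bar i^h_{m_h+1}\bar i^h_{m_h+2}\cdots \bar i^h_{2m_h}$; (2) $s_1=s_2$ (both states carry the same sign in front of their second term). Then $|\mathcal{G}_a\rangle$ and $|\mathcal{G}_b\rangle$ are the same state (for every measurement outcome); otherwise (if the conditions fail) they are different.
   Context: Qubits have computational basis $|0\rangle,|1\rangle$; for a bit $b$, $\bar b=1-b$ denotes its negation. For $N\ge 2$ qubits, the GHZ basis is the orthonormal basis of $N$-qubit states $\frac{1}{\sqrt2}\big(|0\,b_2b_3\cdots b_N\rangle\pm|1\,\bar b_2\bar b_3\cdots\bar b_N\rangle\big)$, $b_2,\dots,b_N\in\{0,1\}$; for $N=2$ these are the four Bell states $\frac1{\sqrt2}(|00\rangle\pm|11\rangle)$, $\frac1{\sqrt2}(|01\rangle\pm|10\rangle)$, and the measurement is then called a Bell measurement. ''Same state'' means equal as quantum states (up to a global phase). *)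

(* Defs.v *)
From mathcomp Require Import all_boot all_order all_algebra all_field.
Set Implicit Arguments. Unset Strict Implicit. Unset Printing Implicit Defensive.
Import Order.TTheory GRing.Theory Num.Theory.
Local Open Scope ring_scope.

(* computational basis labels of an n-qubit register: bit strings of length n *)
Notation bits n := {ffun 'I_n -> bool}.

(* (unnormalized) state vectors of an n-qubit register: amplitude functions *)
Notation qvec n := {ffun bits n -> algC}.

Definition ket n (x : bits n) : qvec n := [ffun y => (y == x)%:R].

Definition negb_bits n (x : bits n) : bits n := [ffun k => ~~ x k].

Definition join m n (a : bits m) (b : bits n) : bits (m + n) :=
  [ffun k => match split k with inl i => a i | inr j => b j end].
Definition lbits m n (z : bits (m + n)) : bits m := [ffun i => z (lshift n i)].
Definition rbits m n (z : bits (m + n)) : bits n := [ffun j => z (rshift m j)].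

Definition tensor m n (u : qvec m) (v : qvec n) : qvec (m + n) :=
  [ffun z => u (lbits z) * v (rbits z)].

Definition scv n (c : algC) (v : qvec n) : qvec n := [ffun y => c * v y].

Definition first0 n (x : bits n) : Prop := forall k : 'I_n, val k = 0%N -> x k = false.

Definition ghz n (x : bits n) (s : algC) : qvec n :=
  scv (sqrtC 2)^-1 (ket x + scv s (ket (negb_bits x))).

Definition in_ghz_basis n (v : qvec n) : Prop :=
  exists (x : bits n) (s : algC), first0 x /\ (s = 1 \/ s = -1) /\ v = ghz x s.

Definition qnorm n (v : qvec n) : algC := sqrtC (\sum_y `|v y| ^+ 2).
Definition normalize n (v : qvec n) : qvec n := scv (qnorm v)^-1 v.

(* equal as quantum states: equal up to a global phase *)
Definition same_state n (u v : qvec n) : Prop :=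
  exists c : algC, `|c| = 1 /\ u = scv c v.

(* unnormalized post-measurement state of register B after projecting register A
   (joint amplitude psi x y, x on A, y on B) onto the state a *)
Definition collapse p q (psi : bits p -> bits q -> algC) (a : qvec p) : qvec q :=
  [ffun y => \sum_x (a x)^* * psi x y].

(* amplitude of |G1> (x) |G2> (2 m1 + 2 m2 qubits), rearranged as
   register A = parts 1,3 (x) and register B = parts 2,4 (y) if parts13,
   register A = parts 1,4 (x) and register B = parts 2,3 (y) otherwise. *)
Definition joint_amp m1 m2 (G1 : qvec (m1 + m1)) (G2 : qvec (m2 + m2)) (parts13 : bool)
  (x : bits (m1 + m2)) (y : bits (m1 + m2)) : algC :=
  if parts13 then
    tensor G1 G2 (join (join (lbits x) (lbits y)) (join (rbits x) (rbits y)))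
  else
    tensor G1 G2 (join (join (lbits x) (lbits y)) (join (rbits y) (rbits x))).

(* Main.v *)
Require Import Defs.
From mathcomp Require Import all_boot all_order all_algebra all_field ring.
Import Order.TTheory GRing.Theory Num.Theory.
Local Open Scope ring_scope.
Set Implicit Arguments. Unset Strict Implicit.

Lemma natr_and (a b : bool) : ((a && b)%:R : algC) = a%:R * b%:R.
Proof. by case: a; case: b; rewrite ?mul1r ?mul0r. Qed.

Lemma negb_bitsK n : involutive (@negb_bits n).
Proof. by move=> x; apply/ffunP=> k; rewrite !ffunE negbK. Qed.

Lemma negb_bits_inj n : injective (@negb_bits n).
Proof. exact: inv_inj (@negb_bitsK n). Qed.

Lemma negb_bits_neq n (hn : (0 < n)%N) (x : bits n) : (x == negb_bits x) = false.
Proof.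
apply/negbTE/eqP => /ffunP /(_ (Ordinal hn)); rewrite ffunE; by case: (x _).
Qed.

Lemma negb_bits_neq' n (hn : (0 < n)%N) (x : bits n) : (negb_bits x == x) = false.
Proof. by rewrite eq_sym negb_bits_neq. Qed.

Lemma split_lshift m n (i : 'I_m) : split (lshift n i) = inl i.
Proof. exact: (@unsplitK m n (inl i)). Qed.
Lemma split_rshift m n (i : 'I_n) : split (rshift m i) = inr i.
Proof. exact: (@unsplitK m n (inr i)). Qed.

Lemma lbits_join m n (p : bits m) (q : bits n) : lbits (join p q) = p.
Proof. by apply/ffunP=> i; rewrite !ffunE split_lshift. Qed.
Lemma rbits_join m n (p : bits m) (q : bits n) : rbits (join p q) = q.
Proof. by apply/ffunP=> i; rewrite !ffunE split_rshift. Qed.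
Lemma join_lr m n (z : bits (m + n)) : join (lbits z) (rbits z) = z.
Proof.
apply/ffunP=> k; rewrite !ffunE; rewrite -{2}(splitK k).
by case: (split k) => j /=; rewrite ffunE.
Qed.
Lemma join_eq m n (p p' : bits m) (q q' : bits n) :
  (join p q == join p' q') = (p == p') && (q == q').
Proof.
apply/eqP/andP => [h|[/eqP-> /eqP->]] //.
by split; [rewrite -(lbits_join p q) h lbits_join | rewrite -(rbits_join p q) h rbits_join].
Qed.
Lemma eq_join m n (z : bits (m + n)) p q :
  (z == join p q) = (lbits z == p) && (rbits z == q).
Proof. by rewrite -{1}(join_lr z) join_eq. Qed.
Lemma negb_join m n (p : bits m) (q : bits n) :
  negb_bits (join p q) = join (negb_bits p) (negb_bits q).
Proof. by apply/ffunP=> k; rewrite !ffunE; case: split => j; rewrite ffunE. Qed.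
Lemma lbits_neg m n (z : bits (m + n)) : lbits (negb_bits z) = negb_bits (lbits z).
Proof. by apply/ffunP=> k; rewrite !ffunE. Qed.
Lemma rbits_neg m n (z : bits (m + n)) : rbits (negb_bits z) = negb_bits (rbits z).
Proof. by apply/ffunP=> k; rewrite !ffunE. Qed.

Lemma first0_l m n (z : bits (m + n)) : first0 z -> first0 (lbits z).
Proof. by move=> h k hk; rewrite ffunE h. Qed.

Lemma first0_neq m (hm : (0 < m)%N) (a c : bits m) : first0 a -> first0 c ->
  (c == negb_bits a) = false.
Proof.
move=> ha hc; apply/negbTE/eqP => /ffunP /(_ (Ordinal hm)); rewrite ffunE.
by rewrite ha // hc.
Qed.

Definition r : algC := (sqrtC 2)^-1.
Lemma r_gt0 : 0 < r.
Proof. by rewrite /r invr_gt0 sqrtC_gt0 ltr0n. Qed.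
Lemma r_neq0 : r != 0.
Proof. by rewrite gt_eqF // r_gt0. Qed.
Lemma conj_r : r^* = r.
Proof. by rewrite geC0_conj // ltW // r_gt0. Qed.

Lemma ghzE n (x : bits n) s y :
  ghz x s y = r * ((y == x)%:R + s * (y == negb_bits x)%:R).
Proof. by rewrite /ghz /scv /ket !ffunE. Qed.

Lemma sum_eq_pick n (z : bits n) (f : bits n -> algC) :
  \sum_x (x == z)%:R * f x = f z.
Proof.
rewrite (bigD1 z) //= !eqxx mul1r big1 ?addr0 // => x /negbTE ->; by rewrite mul0r.
Qed.

Lemma pm1_conj (s : algC) : s = 1 \/ s = -1 -> s^* = s.
Proof. by case=> ->; rewrite ?rmorphN rmorph1. Qed.
Lemma pm1_sq (s : algC) : s = 1 \/ s = -1 -> s * s = 1.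
Proof. by case=> ->; rewrite ?mulrNN mulr1. Qed.

Lemma ghz_conj n (x : bits n) s y : s = 1 \/ s = -1 -> (ghz x s y)^* = ghz x s y.
Proof.
move=> hs; apply: conj_Creal; rewrite ghzE rpredM ?rpredD ?rpredM ?rpred_nat //.
  exact: gtr0_real r_gt0.
by case: hs => ->; rewrite ?rpredN rpred1.
Qed.

Lemma collapseE p q (psi : bits p -> bits q -> algC) x0 s :
  s = 1 \/ s = -1 ->
  collapse psi (ghz x0 s) =
  [ffun y => r * (psi x0 y + s * psi (negb_bits x0) y)].
Proof.
move=> hs; apply/ffunP=> y; rewrite !ffunE.
under eq_bigr => x _ do rewrite ghz_conj // ghzE mulrDr mulrDl.
rewrite big_split /=.
under eq_bigr => x _ do rewrite -mulrA.
under [X in _ + X]eq_bigr => x _ do rewrite -!mulrA.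
rewrite -!mulr_sumr !sum_eq_pick; ring.
Qed.

Lemma sqrt2_neq0 : sqrtC 2 != (0 : algC).
Proof. by rewrite gt_eqF // sqrtC_gt0 ltr0n. Qed.

Lemma sum_pick1 n (z : bits n) : \sum_x ((x == z)%:R : algC) = 1.
Proof.
transitivity (\sum_x (x == z)%:R * (1:algC)); first by apply: eq_bigr => x _; rewrite mulr1.
exact: (sum_eq_pick z (fun _ => 1)).
Qed.

Lemma norm_pm1 (s : algC) : s = 1 \/ s = -1 -> `|s| = 1.
Proof. by case=> ->; rewrite ?normrN normr1. Qed.

Definition wv n (q : bits n) (t : algC) : qvec n := ket q + scv t (ket (negb_bits q)).

Lemma wvE n (q : bits n) t y : wv q t y = (y == q)%:R + t * (y == negb_bits q)%:R.
Proof. by rewrite /wv /scv /ket !ffunE. Qed.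

Lemma normalizeE n (hn : (0 < n)%N) (q : bits n) t k y : t = 1 \/ t = -1 -> k != 0 ->
  normalize (scv k (wv q t)) y = k / (`|k| * sqrtC 2) * wv q t y.
Proof.
move=> ht hk.
have hsq : forall y, `|k * wv q t y| ^+ 2 = `|k| ^+ 2 * ((y == q)%:R + (y == negb_bits q)%:R).
  move=> z; rewrite normrM exprMn wvE; congr (_ * _).
  have [->|nq] := eqVneq z q.
    by rewrite negb_bits_neq // mulr0 addr0 normr1 expr1n.
  case: eqP => h2 /=; rewrite ?mulr0 ?addr0 ?normr0 ?expr0n //.
  by rewrite !add0r mulr1 (norm_pm1 ht) expr1n.
have hn2 : qnorm (scv k (wv q t)) = `|k| * sqrtC 2.
  rewrite /qnorm; under eq_bigr => z _ do rewrite ffunE hsq.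
  rewrite -mulr_sumr big_split /= !sum_pick1 sqrtCM ?sqrCK ?normr_ge0 //.
    by rewrite qualifE /= exprn_ge0 ?normr_ge0.
  by rewrite qualifE /= addr_ge0 ?ler01.
rewrite /normalize /scv !ffunE hn2 /=.
by rewrite mulrA (mulrC _ k).
Qed.

Lemma scvE n c (v : qvec n) y : scv c v y = c * v y.
Proof. by rewrite ffunE. Qed.

Lemma pm1_neq (s t : algC) : s = 1 \/ s = -1 -> t = 1 \/ t = -1 -> s * t = 1 -> s = t.
Proof.
move=> hs ht h; rewrite -[t]mul1r -(pm1_sq hs) -mulrA h mulr1 //.
Qed.

Lemma ss_ghz n (hn : (0 < n)%N) (x0 q : bits n) s t k :
  s = 1 \/ s = -1 -> t = 1 \/ t = -1 -> k != 0 ->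
  same_state (ghz x0 s) (normalize (scv k (wv q t))) <->
  ((q = x0 \/ q = negb_bits x0) /\ t = s).
Proof.
move=> hs ht hk; have hk' : `|k| != 0 by rewrite normr_eq0.
have s2 := sqrt2_neq0.
split.
  case=> c [hc hG].
  set mu := c * (k / (`|k| * sqrtC 2)).
  have h : forall y, ghz x0 s y = mu * ((y == q)%:R + t * (y == negb_bits q)%:R).
    move=> y; rewrite hG /scv ffunE normalizeE // wvE /mu mulrA //.
  have hx0 := h x0; have hx1 := h (negb_bits x0).
  rewrite !ghzE ?eqxx ?(negb_bits_neq hn) ?(negb_bits_neq' hn) ?eqxx in hx0 hx1.
  have [eq1|nq] := eqVneq q x0.
    rewrite eq1 ?eqxx ?(negb_bits_neq hn) ?(negb_bits_neq' hn) ?eqxx in hx0 hx1.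
    split; first by left.
    move: hx0 hx1; rewrite !mulr0 !addr0 !add0r !mulr1 => <- /(mulfI r_neq0) //.
  have [eq2|nq2] := eqVneq q (negb_bits x0).
    rewrite eq2 negb_bitsK ?eqxx ?(negb_bits_neq hn) ?(negb_bits_neq' hn) ?eqxx in hx0 hx1.
    split; first by right.
    move: hx0 hx1; rewrite !mulr0 !addr0 !add0r !mulr1 => hx0 hx1.
    apply/esym/pm1_neq => //; apply: (mulfI r_neq0).
    by rewrite mulr1 mulrA hx1 hx0.
  have hq := h q; rewrite ghzE !eqxx negb_bits_neq // (negbTE nq) (negbTE nq2) in hq.
  move: hq; rewrite !mulr0 !addr0 !mulr0 mulr1 => hmu.
  have hr : ghz x0 s x0 = r by rewrite ghzE eqxx (negb_bits_neq hn) mulr0 addr0 mulr1.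
  move: (h x0); rewrite hr -hmu mul0r => /eqP; by rewrite (negbTE r_neq0).
case=> [[] -> ->].
  exists (`|k| / k); split.
    by rewrite normrM normfV normr_id divff.
  apply/ffunP=> y; rewrite [RHS]scvE normalizeE // wvE [LHS]scvE !ffunE; field.
  by rewrite hk hk' s2.
exists (s * `|k| / k); split.
  by rewrite !normrM normfV normr_id norm_pm1 // mul1r divff.
apply/ffunP=> y; rewrite [RHS]scvE normalizeE // wvE [LHS]scvE !ffunE negb_bitsK.
case: hs => ->; field; by rewrite hk hk' s2.
Qed.

Lemma pm1_mul (s t : algC) : s = 1 \/ s = -1 -> t = 1 \/ t = -1 -> s * t = 1 \/ s * t = -1.
Proof.
case=> ->; case=> ->; rewrite ?mulr1 ?mul1r ?mulrN1 ?opprK; by [left|right].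
Qed.

Lemma ghz_join m n (p p' : bits m) (q q' : bits n) s :
  ghz (join p q) s (join p' q') =
  r * ((p' == p)%:R * (q' == q)%:R + s * ((p' == negb_bits p)%:R * (q' == negb_bits q)%:R)).
Proof. by rewrite ghzE negb_join !join_eq !natr_and. Qed.

Lemma negb_eq n (p q : bits n) : (negb_bits p == q) = (p == negb_bits q).
Proof.
apply/eqP/eqP => [<-|->]; by rewrite negb_bitsK.
Qed.
Lemma negb_eq2 n (p q : bits n) : (negb_bits p == negb_bits q) = (p == q).
Proof. exact: (inj_eq (@negb_bits_inj n)). Qed.

Lemma join_inj m n (p p' : bits m) (q q' : bits n) :
  join p q = join p' q' <-> p = p' /\ q = q'.
Proof.
split; first by move/eqP; rewrite join_eq => /andP[/eqP-> /eqP->].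
by case=> -> ->.
Qed.

Lemma sign_iff (s s1 s2 : algC) : s = 1 \/ s = -1 -> s1 = 1 \/ s1 = -1 -> s2 = 1 \/ s2 = -1 ->
  (s * s1 * s2 = s <-> s1 = s2).
Proof.
move=> hs hs1 hs2; split => [h|->].
  apply: pm1_neq => //; apply: (mulfI (x := s)); first by case: hs => ->; rewrite ?oppr_eq0 oner_eq0.
  by rewrite mulrA h mulr1.
by rewrite -mulrA pm1_sq // mulr1.
Qed.

Lemma core m1 m2 (hm1 : (0 < m1)%N) (hm2 : (0 < m2)%N) (a b : bits m1) (u v : bits m2)
  s1 s2 s (x0 : bits (m1 + m2)) (ha : first0 a) (hx0 : first0 x0)
  (hs1 : s1 = 1 \/ s1 = -1) (hs2 : s2 = 1 \/ s2 = -1) (hs : s = 1 \/ s = -1)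
  (psi : bits (m1 + m2) -> bits (m1 + m2) -> algC)
  (hpsi : forall x y, psi x y = ghz (join a b) s1 (join (lbits x) (lbits y)) *
                               ghz (join u v) s2 (join (rbits x) (rbits y))) :
  collapse psi (ghz x0 s) != 0 ->
  same_state (ghz x0 s) (normalize (collapse psi (ghz x0 s))) <->
  (((b = a /\ v = u) \/ (b = negb_bits a /\ v = negb_bits u)) /\ s1 = s2).
Proof.
have hn : (0 < m1 + m2)%N by rewrite addn_gt0 hm1.
rewrite collapseE // => hocc.
have hc := first0_l hx0.
set c := lbits x0 in hc; set d := rbits x0.
have ex0 : x0 = join c d by rewrite join_lr.
have hca : (c == negb_bits a) = false by apply: first0_neq.
have hca' : (negb_bits c == a) = false by rewrite negb_eq hca.
have hE : forall y, r * (psi x0 y + s * psi (negb_bits x0) y) =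
   r * (r * ((c == a)%:R * (lbits y == b)%:R + s1 * ((c == negb_bits a)%:R * (lbits y == negb_bits b)%:R)) *
        (r * ((d == u)%:R * (rbits y == v)%:R + s2 * ((d == negb_bits u)%:R * (rbits y == negb_bits v)%:R))) +
     s * (r * ((negb_bits c == a)%:R * (lbits y == b)%:R + s1 * ((negb_bits c == negb_bits a)%:R * (lbits y == negb_bits b)%:R)) *
        (r * ((negb_bits d == u)%:R * (rbits y == v)%:R + s2 * ((negb_bits d == negb_bits u)%:R * (rbits y == negb_bits v)%:R))))).
  by move=> y; rewrite !hpsi !ghz_join ex0 negb_join !lbits_join !rbits_join.
have {}hE : forall y, r * (psi x0 y + s * psi (negb_bits x0) y) =
   r * (r * ((c == a)%:R * (lbits y == b)%:R) *
        (r * ((d == u)%:R * (rbits y == v)%:R + s2 * ((d == negb_bits u)%:R * (rbits y == negb_bits v)%:R))) +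
     s * (r * (s1 * ((c == a)%:R * (lbits y == negb_bits b)%:R)) *
        (r * ((d == negb_bits u)%:R * (rbits y == v)%:R + s2 * ((d == u)%:R * (rbits y == negb_bits v)%:R))))).
  by move=> y; rewrite hE hca hca' !negb_eq2 negb_eq !mul0r !mulr0 addr0 add0r.
have eca : c = a.
  apply/eqP; apply: contraNT hocc => nca; apply/eqP/ffunP => y.
  rewrite ffunE hE (negbTE nca) ffunE /=; ring.
rewrite {}eca in hE ex0.
have hk3 : r * r * r != 0 by rewrite !mulf_neq0 // r_neq0.
have [edu|ndu] := eqVneq d u.
  rewrite {}edu in hE ex0.
  have -> : [ffun y => r * (psi x0 y + s * psi (negb_bits x0) y)] =
            scv (r * r * r) (wv (join b v) (s * s1 * s2)).
    apply/ffunP=> y; rewrite ffunE hE scvE wvE negb_join !eq_join !natr_and.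
    rewrite ?eqxx ?(negb_bits_neq hm2) ?(negb_bits_neq' hm2) /=; ring.
  have ht : s * s1 * s2 = 1 \/ s * s1 * s2 = -1.
    by apply: pm1_mul => //; apply: pm1_mul.
  apply: (iff_trans (ss_ghz hn _ _ hs ht hk3)).
  have hsg := sign_iff hs hs1 hs2.
  rewrite ex0 negb_join.
  have h1 := join_inj b a v u; have h2 := join_inj b (negb_bits a) v (negb_bits u).
  tauto.
have [edu|ndu2] := eqVneq d (negb_bits u).
  rewrite {}edu in hE ex0.
  have -> : [ffun y => r * (psi x0 y + s * psi (negb_bits x0) y)] =
            scv (r * r * r * s2) (wv (join b (negb_bits v)) (s * s1 * s2)).
    apply/ffunP=> y; rewrite ffunE hE scvE wvE negb_join !eq_join !natr_and negb_bitsK.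
    rewrite ?eqxx ?(negb_bits_neq hm2) ?(negb_bits_neq' hm2) /=.
    by case: hs2 => ->; ring.
  have ht : s * s1 * s2 = 1 \/ s * s1 * s2 = -1.
    by apply: pm1_mul => //; apply: pm1_mul.
  have hk4 : r * r * r * s2 != 0.
    by rewrite mulf_neq0 //; case: hs2 => ->; rewrite ?oppr_eq0 oner_eq0.
  apply: (iff_trans (ss_ghz hn _ _ hs ht hk4)).
  have hsg := sign_iff hs hs1 hs2.
  rewrite ex0 negb_join negb_bitsK.
  have h1 := join_inj b a (negb_bits v) (negb_bits u).
  have h2 := join_inj b (negb_bits a) (negb_bits v) u.
  have h3 : negb_bits v = negb_bits u <-> v = u.
    by split => [/negb_bits_inj|->].
  have h4 : negb_bits v = u <-> v = negb_bits u.
    by split => [<-|->]; rewrite negb_bitsK.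
  tauto.
exfalso; move/eqP: hocc; apply; apply/ffunP => y.
by rewrite ffunE hE (negbTE ndu) (negbTE ndu2) ffunE !mul0r !mulr0 !add0r !mulr0 addr0 mulr0.
Qed.

Theorem theorem1 (m1 m2 : nat) (hm1 : (0 < m1)%N) (hm2 : (0 < m2)%N)
  (i1 : bits (m1 + m1)) (i2 : bits (m2 + m2)) (s1 s2 : algC)
  (hi1 : first0 i1) (hi2 : first0 i2)
  (hs1 : s1 = 1 \/ s1 = -1) (hs2 : s2 = 1 \/ s2 = -1)
  (parts13 : bool) (Ga : qvec (m1 + m2))
  (hGa : in_ghz_basis Ga)
  (hocc : collapse (joint_amp (ghz i1 s1) (ghz i2 s2) parts13) Ga != 0) :
  same_state Ga (normalize (collapse (joint_amp (ghz i1 s1) (ghz i2 s2) parts13) Ga))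
  <->
  (((lbits i1 = rbits i1 /\ lbits i2 = rbits i2) \/
    (lbits i1 = negb_bits (rbits i1) /\ lbits i2 = negb_bits (rbits i2)))
   /\ s1 = s2).
Proof.
case: hGa hocc => x0 [s [hx0 [hs ->]]] hocc.
have ha := first0_l hi1.
have hn1 : forall (p q : bits m1), p = negb_bits q <-> q = negb_bits p.
  by move=> p q; split => ->; rewrite negb_bitsK.
have hn2 : forall (p q : bits m2), p = negb_bits q <-> q = negb_bits p.
  by move=> p q; split => ->; rewrite negb_bitsK.
case: parts13 hocc => hocc.
  apply: (iff_trans (core hm1 hm2 (b := rbits i1) (u := lbits i2) (v := rbits i2)
                       ha hx0 hs1 hs2 hs _ hocc)).
    move=> x y; rewrite /joint_amp /tensor ffunE !lbits_join !rbits_join.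
    by rewrite !join_lr.
  have := hn1 (lbits i1) (rbits i1); have := hn2 (lbits i2) (rbits i2).
  have e1 : forall (p q : bits m1), p = q <-> q = p by move=> p q; split=> ->.
  have e2 : forall (p q : bits m2), p = q <-> q = p by move=> p q; split=> ->.
  have := e1 (lbits i1) (rbits i1); have := e2 (lbits i2) (rbits i2).
  tauto.
apply: (iff_trans (core hm1 hm2 (b := rbits i1) (u := rbits i2) (v := lbits i2)
                     ha hx0 hs1 hs2 hs _ hocc)).
  move=> x y; rewrite /joint_amp /tensor ffunE !lbits_join !rbits_join.
  rewrite -{1}(join_lr i1) -{1}(join_lr i2) !ghz_join; ring.
have := hn1 (lbits i1) (rbits i1); have := hn2 (lbits i2) (rbits i2).
have e1 : forall (p q : bits m1), p = q <-> q = p by move=> p q; split=> ->.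
have := e1 (lbits i1) (rbits i1).
tauto.
Qed.
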